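(* Let $G$ be a multiplicative monoid with identity, let $N$ and $M$ be $G$-graded near-rings and let $P$ be a graded ideal of $N$. Then $P$ is a graded almost prime ideal of $N$ if and only if $P\times M$ is a graded almost prime ideal of $N\times M$.
   Context: A near-ring $(N,+,\cdot)$ is a set with two binary operations such that $(N,+)$ is a group (not necessarily abelian), $(N,\cdot)$ is a semigroup, and $(a+b)y = ay+by$ for all $a,b,y\in N$. For a multiplicative monoid $G$ with identity, $N$ is a $G$-graded near-ring if there is a family $\{N_\sigma\}_{\sigma\in G}$ of additive normal subgroups of $N$ with $N=\bigoplus_{\sigma\in G}N_\sigma$ and $N_\sigma N_\tau\subseteq N_{\sigma\tau}$. $N\times M$ is $G$-graded with components $N_\sigma\times M_\sigma$. An ideal $P$ is graded if $P=\bigoplus_{\sigma}(P\cap N_\sigma)$. For ideals $I,J$, $IJ$ denotes their product and $P^2=PP$; for a graded ideal $P$ of a graded near-ring $R$ the paper writes $P^2\cap R$. A graded ideal $P$ of $R$ is graded almost prime if for all graded ideals $I,J$ of $R$ with $IJ\subseteq P$ and $IJ\not\subseteq P^2\cap R$, either $I\subseteq P$ or $J\subseteq P$. *)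

(* Defs.v *)
From Stdlib Require Import List.
Import ListNotations.
Set Implicit Arguments.

Record monoid := Monoid {
  m_car :> Type;
  m_mul : m_car -> m_car -> m_car;
  m_one : m_car;
  m_mulA : forall a b c, m_mul a (m_mul b c) = m_mul (m_mul a b) c;
  m_mul1l : forall a, m_mul m_one a = a;
  m_mul1r : forall a, m_mul a m_one = a
}.

(** A (right) near-ring: (N,+) a group (not necessarily abelian),
    (N,.) a semigroup, and (a+b)y = ay + by. *)
Record nearRing := NearRing {
  nr_car :> Type;
  nr_add : nr_car -> nr_car -> nr_car;
  nr_opp : nr_car -> nr_car;
  nr_zero : nr_car;
  nr_mul : nr_car -> nr_car -> nr_car;
  nr_addA : forall a b c, nr_add a (nr_add b c) = nr_add (nr_add a b) c;
  nr_add0l : forall a, nr_add nr_zero a = a;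
  nr_add0r : forall a, nr_add a nr_zero = a;
  nr_addNl : forall a, nr_add (nr_opp a) a = nr_zero;
  nr_addNr : forall a, nr_add a (nr_opp a) = nr_zero;
  nr_mulA : forall a b c, nr_mul a (nr_mul b c) = nr_mul (nr_mul a b) c;
  nr_mulDl : forall a b y, nr_mul (nr_add a b) y = nr_add (nr_mul a y) (nr_mul b y)
}.

Arguments nr_add {n} _ _.
Arguments nr_opp {n} _.
Arguments nr_mul {n} _ _.
Arguments m_mul {m} _ _.

Section Prod.
Variables N M : nearRing.
Definition pr_add (x y : N * M) : N * M := (nr_add (fst x) (fst y), nr_add (snd x) (snd y)).
Definition pr_opp (x : N * M) : N * M := (nr_opp (fst x), nr_opp (snd x)).
Definition pr_zero : N * M := (nr_zero N, nr_zero M).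
Definition pr_mul (x y : N * M) : N * M := (nr_mul (fst x) (fst y), nr_mul (snd x) (snd y)).

Lemma pr_addA a b c : pr_add a (pr_add b c) = pr_add (pr_add a b) c.
Proof. unfold pr_add; simpl; f_equal; apply nr_addA. Qed.
Lemma pr_add0l a : pr_add pr_zero a = a.
Proof. destruct a; unfold pr_add; simpl; f_equal; apply nr_add0l. Qed.
Lemma pr_add0r a : pr_add a pr_zero = a.
Proof. destruct a; unfold pr_add; simpl; f_equal; apply nr_add0r. Qed.
Lemma pr_addNl a : pr_add (pr_opp a) a = pr_zero.
Proof. unfold pr_add, pr_zero; simpl; f_equal; apply nr_addNl. Qed.
Lemma pr_addNr a : pr_add a (pr_opp a) = pr_zero.
Proof. unfold pr_add, pr_zero; simpl; f_equal; apply nr_addNr. Qed.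
Lemma pr_mulA a b c : pr_mul a (pr_mul b c) = pr_mul (pr_mul a b) c.
Proof. unfold pr_mul; simpl; f_equal; apply nr_mulA. Qed.
Lemma pr_mulDl a b y : pr_mul (pr_add a b) y = pr_add (pr_mul a y) (pr_mul b y).
Proof. unfold pr_mul, pr_add; simpl; f_equal; apply nr_mulDl. Qed.

Definition nr_prod : nearRing :=
  @NearRing (N * M) pr_add pr_opp pr_zero pr_mul
    pr_addA pr_add0l pr_add0r pr_addNl pr_addNr pr_mulA pr_mulDl.
End Prod.

Section Defs.
Variable G : monoid.
Variable N : nearRing.

Definition subset (A B : N -> Prop) : Prop := forall x, A x -> B x.

Definition sumL (l : list N) : N := fold_right (@nr_add N) (nr_zero N) l.

Definition is_normal_subgroup (S : N -> Prop) : Prop :=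
  S (nr_zero N) /\
  (forall x y, S x -> S y -> S (nr_add x y)) /\
  (forall x, S x -> S (nr_opp x)) /\
  (forall n x, S x -> S (nr_add (nr_add n x) (nr_opp n))).

(** Ideal of a near-ring (Pilz): a normal subgroup I of (N,+) with
    IN subset I and n(m+i) - nm in I for all n, m in N, i in I. *)
Definition is_ideal (I : N -> Prop) : Prop :=
  is_normal_subgroup I /\
  (forall i n, I i -> I (nr_mul i n)) /\
  (forall n m i, I i -> I (nr_add (nr_mul n (nr_add m i)) (nr_opp (nr_mul n m)))).

(** S is the internal direct sum of the family F (sigma in G):
    S is exactly the set of finite sums of elements of the F sigma, and each
    F sigma meets the subgroup generated by the other F tau (tau <> sigma)
    only in 0. *)
Definition is_dsum (S : N -> Prop) (F : G -> N -> Prop) : Prop :=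
  (forall x, S x <->
     exists l : list (G * N), (forall p, In p l -> F (fst p) (snd p)) /\
                              x = sumL (map snd l)) /\
  (forall (s : G) x, F s x ->
     (exists l : list (G * N),
         (forall p, In p l -> fst p <> s /\ F (fst p) (snd p)) /\
         x = sumL (map snd l)) ->
     x = nr_zero N).

Definition is_grading (F : G -> N -> Prop) : Prop :=
  (forall s, is_normal_subgroup (F s)) /\
  is_dsum (fun _ => True) F /\
  (forall s t x y, F s x -> F t y -> F (m_mul s t) (nr_mul x y)).

Definition graded_ideal (F : G -> N -> Prop) (P : N -> Prop) : Prop :=
  is_ideal P /\ is_dsum P (fun s x => P x /\ F s x).

Definition prodset (I J : N -> Prop) : N -> Prop :=
  fun x => exists i j, I i /\ J j /\ x = nr_mul i j.

Definition graded_almost_prime (F : G -> N -> Prop) (P : N -> Prop) : Prop :=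
  graded_ideal F P /\
  forall I J : N -> Prop, graded_ideal F I -> graded_ideal F J ->
    subset (prodset I J) P ->
    ~ subset (prodset I J) (prodset P P) ->
    subset I P \/ subset J P.
End Defs.

Definition prod_grading (G : monoid) (N M : nearRing)
  (FN : G -> N -> Prop) (FM : G -> M -> Prop) : G -> nr_prod N M -> Prop :=
  fun s x => FN s (fst x) /\ FM s (snd x).

Definition prod_left (N M : nearRing) (P : N -> Prop) : nr_prod N M -> Prop :=
  fun x => P (fst x).

Arguments is_grading {G N} F.
Arguments graded_ideal {G N} F P.
Arguments graded_almost_prime {G N} F P.
Arguments prod_grading {G N M} FN FM _.
Arguments prod_left {N} M P _.

(* Main.v *)
Require Import Defs.
From Stdlib Require Import List.
Import ListNotations.

Lemma sumL_prod (N M : nearRing) (l : list (nr_prod N M)) :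
  sumL (nr_prod N M) l = (sumL N (map fst l), sumL M (map snd l)).
Proof. induction l as [|a l IH]; simpl; [reflexivity|]. rewrite IH. reflexivity. Qed.

Lemma sumL_zeros (N : nearRing) (A : Type) (l : list A) :
  sumL N (map (fun _ => nr_zero N) l) = nr_zero N.
Proof. induction l; simpl; auto. rewrite IHl. apply nr_add0l. Qed.

Lemma sumL_app (N : nearRing) (l1 l2 : list N) :
  sumL N (l1 ++ l2) = nr_add (sumL N l1) (sumL N l2).
Proof.
  induction l1 as [|a l IH]; simpl. now rewrite nr_add0l.
  rewrite IH. apply nr_addA.
Qed.

Lemma sumL_closed (N : nearRing) (S : N -> Prop) (l : list N) :
  is_normal_subgroup N S -> (forall x, In x l -> S x) -> S (sumL N l).
Proof.
  intros [H0 [HA _]]. induction l as [|a l IH]; simpl; intros H; auto.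
Qed.

Lemma L1 (G : monoid) (N M : nearRing) (FN : G -> N -> Prop) (FM : G -> M -> Prop)
  (Q : N -> Prop) :
  is_grading FN -> graded_ideal FN Q -> is_grading FM ->
  graded_ideal (prod_grading FN FM) (prod_left M Q).
Proof.
  intros [GN _] [[[I0 [IA [IN IC]]] [IM IT]] [D1 D2]] [GM [[E1 E2] _]].
  assert (Hid : is_ideal (nr_prod N M) (prod_left M Q)).
  { split; [split; [|split; [|split]]|split]; unfold prod_left; cbn; intros; auto. }
  split; [exact Hid|]. split.
  - intros [a b]; split.
    + intros Ha. unfold prod_left in Ha; cbn in Ha.
      destruct (proj1 (D1 a) Ha) as [la [Hla ->]].
      destruct (proj1 (E1 b) I) as [lb [Hlb ->]].
      exists (map (fun p => (fst p, (snd p, nr_zero M))) la ++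
              map (fun p => (fst p, (nr_zero N, snd p))) lb).
      split.
      * intros p Hp. apply in_app_or in Hp as [Hp|Hp];
          apply in_map_iff in Hp as [q [<- Hq]]; unfold prod_left, prod_grading; cbn.
        -- destruct (Hla q Hq) as [h1 h2]. split; [|split]; auto. apply (GM (fst q)).
        -- split; [|split]; auto. apply (GN (fst q)).
      * rewrite map_app, sumL_app, !map_map, !sumL_prod; cbn.
        rewrite !map_map; cbn. rewrite !sumL_zeros. unfold pr_add; cbn.
        f_equal. now rewrite nr_add0r. now rewrite nr_add0l.
    + intros [l [Hl ->]]. unfold prod_left. rewrite sumL_prod; cbn.
      apply sumL_closed. exact (conj I0 (conj IA (conj IN IC))).
      intros x Hx. rewrite map_map in Hx. apply in_map_iff in Hx as [q [<- Hq]].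
      exact (proj1 (Hl q Hq)).
  - intros s [a b] [Ha [Fa Fb]] [l [Hl Hx]].
    rewrite sumL_prod in Hx. injection Hx as Hx1 Hx2.
    unfold prod_left in Ha; cbn in *. unfold pr_zero. f_equal.
    + apply (D2 s); [split; auto|].
      exists (map (fun p => (fst p, fst (snd p))) l). split.
      * intros p Hp. apply in_map_iff in Hp as [q [<- Hq]].
        destruct (Hl q Hq) as [h1 [h2 [h3 h4]]]. cbn. auto.
      * rewrite Hx1, !map_map. reflexivity.
    + apply (E2 s); [auto|].
      exists (map (fun p => (fst p, snd (snd p))) l). split.
      * intros p Hp. apply in_map_iff in Hp as [q [<- Hq]].
        destruct (Hl q Hq) as [h1 [h2 [h3 h4]]]. cbn. auto.
      * rewrite Hx2, !map_map. reflexivity.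
Qed.

Lemma L2 (G : monoid) (N M : nearRing) (FN : G -> N -> Prop) (FM : G -> M -> Prop)
  (Q : nr_prod N M -> Prop) :
  is_grading FN -> graded_ideal (prod_grading FN FM) Q ->
  graded_ideal FN (fun x => exists y, Q (x, y)).
Proof.
  intros [GN [[_ E2] _]] [[[I0 [IA [IN IC]]] [IM IT]] [D1 D2]].
  assert (Hid : is_ideal N (fun x => exists y, Q (x, y))).
  { split; [split; [|split; [|split]]|split].
    - exists (nr_zero M). exact I0.
    - intros x y [a Ha] [b Hb]. exact (ex_intro _ _ (IA _ _ Ha Hb)).
    - intros x [a Ha]. exact (ex_intro _ _ (IN _ Ha)).
    - intros n x [a Ha]. exact (ex_intro _ _ (IC (n, nr_zero M) _ Ha)).
    - intros i n [a Ha]. exact (ex_intro _ _ (IM _ (n, nr_zero M) Ha)).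
    - intros n m i [a Ha]. exact (ex_intro _ _ (IT (n, nr_zero M) (m, nr_zero M) _ Ha)). }
  split; [exact Hid|]. split.
  - intros x; split.
    + intros [y Hy]. destruct (proj1 (D1 (x, y)) Hy) as [l [Hl Hx]].
      rewrite sumL_prod in Hx. injection Hx as Hx1 Hx2.
      exists (map (fun p => (fst p, fst (snd p))) l). split.
      * intros p Hp. apply in_map_iff in Hp as [q [<- Hq]].
        destruct (Hl q Hq) as [h1 [h2 h3]]. cbn. split; auto.
        exists (snd (snd q)). destruct q as [s [u v]]. exact h1.
      * rewrite Hx1, !map_map. reflexivity.
    + intros [l [Hl ->]]. apply sumL_closed. exact (proj1 Hid).
      intros x Hx. apply in_map_iff in Hx as [q [<- Hq]]. exact (proj1 (Hl q Hq)).
  - intros s x [_ Hx] [l [Hl Hs]]. apply (E2 s x Hx).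
    exists l. split; auto. intros p Hp. destruct (Hl p Hp) as [h1 [_ h2]]. auto.
Qed.

Theorem theorem17 (G : monoid) (N M : nearRing)
  (FN : G -> N -> Prop) (FM : G -> M -> Prop) (P : N -> Prop) :
  is_grading FN -> is_grading FM -> graded_ideal FN P ->
  (graded_almost_prime FN P <->
   graded_almost_prime (prod_grading FN FM) (prod_left M P)).
Proof.
  intros GN GM HP. split.
  - intros [_ Hap]. split; [now apply L1|].
    intros I J HI HJ HIJ Hn.
    destruct (Hap (fun x => exists y, I (x, y)) (fun x => exists y, J (x, y))
                (@L2 G N M FN FM _ GN HI) (@L2 G N M FN FM _ GN HJ)) as [H1|H1].
    + intros x [i [j [[y1 Hi] [[y2 Hj] ->]]]].
      exact (HIJ (nr_mul (n:=nr_prod N M) (i, y1) (j, y2))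
                 (ex_intro _ (i, y1) (ex_intro _ (j, y2) (conj Hi (conj Hj eq_refl))))).
    + intros Hs. apply Hn. intros x [[u1 u2] [[v1 v2] [Hu [Hv ->]]]].
      destruct (Hs (nr_mul u1 v1)) as [p [q [Hp [Hq E]]]].
      { exists u1, v1. split; [exists u2; exact Hu|split; [exists v2; exact Hv|reflexivity]]. }
      exists (p, u2), (q, v2). unfold prod_left; cbn. split; [|split]; auto.
      unfold pr_mul; cbn. now rewrite E.
    + left. intros [a b] H. apply (H1 a). exists b. exact H.
    + right. intros [a b] H. apply (H1 a). exists b. exact H.
  - intros [_ Hap]. split; [exact HP|].
    intros I J HI HJ HIJ Hn.
    destruct (Hap (prod_left M I) (prod_left M J) (@L1 G N M FN FM _ GN HI GM) (@L1 G N M FN FM _ GN HJ GM))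
      as [H1|H1].
    + intros x [u [v [Hu [Hv ->]]]]. unfold prod_left; cbn. apply HIJ.
      exists (fst u), (fst v). auto.
    + intros Hs. apply Hn. intros x [i [j [Hi [Hj ->]]]].
      destruct (Hs (nr_mul (n:=nr_prod N M) (i, nr_zero M) (j, nr_zero M)))
        as [p [q [Hp [Hq E]]]].
      { exists (i, nr_zero M), (j, nr_zero M). unfold prod_left; cbn. auto. }
      exists (fst p), (fst q). split; [exact Hp|split; [exact Hq|]].
      apply (f_equal fst) in E. exact E.
    + left. intros x Hx. exact (H1 (x, nr_zero M) Hx).
    + right. intros x Hx. exact (H1 (x, nr_zero M) Hx).
Qed.
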